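(* Let $G_0,G_1\in\mathbb{Z}$, let $(G_n)_{n\ge0}$ satisfy $G_n=G_{n-1}+G_{n-2}$ for $n\ge2$, and let $\mu = G_1^2 - G_0 G_1 - G_0^2$. For every odd integer $k \geq 1$, $\mathcal{G}^2_{G_0,G_1}(k)$ divides $|2\mu|$.
   Context: $\mathcal{G}^2_{G_0,G_1}(k)=\gcd\{\sum_{i=1}^k G_{n+i}^2 : n\ge 0\}$ (nonnegative gcd of this infinite set of integers). *)

(* Defs.v *)
From Stdlib Require Import ZArith.
Open Scope Z_scope.

Definition is_gcd_of_set (S : Z -> Prop) (g : Z) : Prop :=
  0 <= g /\ (forall x, S x -> (g | x)) /\
  (forall d, (forall x, S x -> (d | x)) -> (d | g)).

Fixpoint sq_window (G : nat -> Z) (n k : nat) : Z :=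
  match k with
  | O => 0
  | S k' => sq_window G n k' + G (n + S k')%nat ^ 2
  end.

Definition sq_window_set (G : nat -> Z) (k : nat) : Z -> Prop :=
  fun x => exists n : nat, x = sq_window G n k.

(* Main.v *)
Require Import Defs.
From Stdlib Require Import ZArith Lia.
Open Scope Z_scope.

Section S.
Variable G : nat -> Z.
Hypothesis hrec : forall n : nat, (2 <= n)%nat -> G n = G (n - 1)%nat + G (n - 2)%nat.

Definition q (m : nat) : Z := G (m+2)%nat ^ 2 - 3 * G (m+1)%nat ^ 2 + G m ^ 2.

Fixpoint qs (n k : nat) : Z :=
  match k with O => 0 | S k' => qs n k' + q (n + S k')%nat end.

Lemma rec2 m : G (m+2)%nat = G (m+1)%nat + G m.
Proof.
  rewrite (hrec (m+2)) by lia.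
  replace (m+2-1)%nat with (m+1)%nat by lia.
  replace (m+2-2)%nat with m by lia. reflexivity.
Qed.

Lemma lin k n : sq_window G (n+2) k - 3 * sq_window G (n+1) k + sq_window G n k = qs n k.
Proof.
  induction k as [|k IH]; cbn [sq_window qs]. lia.
  rewrite <- IH. unfold q.
  replace (n + 2 + S k)%nat with (n + S k + 2)%nat by lia.
  replace (n + 1 + S k)%nat with (n + S k + 1)%nat by lia.
  ring.
Qed.

Lemma qq m : q m + q (S m) = 0.
Proof.
  unfold q.
  replace (S m + 2)%nat with (m + 1 + 2)%nat by lia.
  replace (S m + 1)%nat with (m + 2)%nat by lia.
  replace (S m) with (m+1)%nat by lia.
  rewrite (rec2 (m+1)). replace (m+1+1)%nat with (m+2)%nat by lia.
  rewrite (rec2 m). ring.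
Qed.

Lemma qs_odd j : qs 0 (2*j+1) = q 1.
Proof.
  induction j as [|j IH]. simpl. ring.
  replace (2 * S j + 1)%nat with (S (S (2*j+1))) by lia.
  change (qs 0 (S (S (2*j+1)))) with (qs 0 (2*j+1) + q (0 + S (2*j+1)) + q (0 + S (S (2*j+1)))).
  rewrite IH.
  replace (0 + S (S (2 * j + 1)))%nat with (S (0 + S (2*j+1))) by lia.
  pose proof (qq (0 + S (2*j+1))). lia.
Qed.

Lemma q1 : q 1 = 2 * (G 1%nat ^ 2 - G 0%nat * G 1%nat - G 0%nat ^ 2).
Proof.
  unfold q. pose proof (rec2 1) as A. pose proof (rec2 0) as B. cbn [Nat.add] in A, B |- *.
  rewrite A, B. ring.
Qed.
End S.

Theorem theorem4p8 (G : nat -> Z)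
  (hrec : forall n : nat, (2 <= n)%nat -> G n = G (n - 1)%nat + G (n - 2)%nat)
  (k : nat) (hk1 : (1 <= k)%nat) (hkodd : Nat.odd k = true)
  (g : Z) (hg : is_gcd_of_set (sq_window_set G k) g) :
  (g | Z.abs (2 * (G 1%nat ^ 2 - G 0%nat * G 1%nat - G 0%nat ^ 2))).
Proof.
  destruct hg as [_ [hd _]].
  apply Z.divide_abs_r.
  destruct (Nat.odd_spec k) as [H _]. destruct (H hkodd) as [j Hj].
  rewrite <- (q1 G hrec), <- (qs_odd G hrec j), <- Hj, <- (lin G k 0).
  apply Z.divide_add_r; [apply Z.divide_sub_r|].
  - apply hd. exists 2%nat. reflexivity.
  - apply Z.divide_mul_r. apply hd. exists 1%nat. reflexivity.
  - apply hd. exists 0%nat. reflexivity.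
Qed.
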